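(* Let $m_1,m_2$ be positive integers. If $\Delta(\mathcal{T},m_1)$ and $\Delta(\mathcal{T},m_2)$ are isomorphic as unlabelled directed graphs, then $m_1=m_2$.
   Context: A quasi-array of size $m$ is an array $Q$ with cells $(i,j)$, $1\le i\le m$, $1\le j\le m-i+1$, each containing a positive integer $Q_{(i,j)}$, with $Q_{(1,j)}\le Q_{(1,j+1)}$ and $Q_{(i,j)}=Q_{(1,i+j-1)}+i-1$. The $k$-th diagonal is the set of cells $(i,j)$ with $i+j-1=k$. For $Q$ of size $m$: $D_m$ is always defined and adds $1$ to every entry of the $m$-th diagonal; for $1\le k\le m-1$, $D_k$ is defined iff $Q_{(1,k)}<Q_{(1,k+1)}$, and then adds $1$ to every entry of the $k$-th diagonal; $D_k$ is undefined for $k>m$. $\Delta(\mathcal{T},m)$ is the directed graph whose vertices are the quasi-arrays of size $m$, with an edge $Q\to D_k(Q)$ labelled $k$ whenever $D_k$ is defined on $Q$. *)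

(* Defs.v *)
From mathcomp Require Import all_boot.
Set Implicit Arguments. Unset Strict Implicit. Unset Printing Implicit Defensive.

(* An array is a function (i, j) |-> entry, 1-indexed. *)
Definition array := nat -> nat -> nat.

Definition is_cell (m i j : nat) : bool :=
  [&& 1 <= i, i <= m, 1 <= j & j <= m - i + 1].

(* Quasi-array of size m.  Entries outside the cells are normalised to 0
   so that a quasi-array is exactly its family of cell entries. *)
Definition is_quasi_array (m : nat) (Q : array) : Prop :=
  (forall i j, is_cell m i j -> 0 < Q i j) /\
  (forall j, 1 <= j -> j < m -> Q 1 j <= Q 1 j.+1) /\
  (forall i j, is_cell m i j -> Q i j = Q 1 (i + j - 1) + (i - 1)) /\
  (forall i j, ~~ is_cell m i j -> Q i j = 0).

Definition quasi_array (m : nat) := {Q : array | is_quasi_array m Q}.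

Definition D_defined (m k : nat) (Q : array) : Prop :=
  k = m \/ (1 <= k /\ k <= m - 1 /\ Q 1 k < Q 1 k.+1).

Definition D (m k : nat) (Q : array) : array :=
  fun i j => if is_cell m i j && (i + j - 1 == k) then (Q i j).+1 else Q i j.

Definition Delta_edge (m : nat) (P Q : quasi_array m) : Prop :=
  exists k, D_defined m k (proj1_sig P) /\ proj1_sig Q = D m k (proj1_sig P).

Definition Delta_isomorphic (m1 m2 : nat) : Prop :=
  exists f : quasi_array m1 -> quasi_array m2,
    bijective f /\
    forall P Q, Delta_edge P Q <-> Delta_edge (f P) (f Q).

(* Main.v *)
Require Import Defs.
From mathcomp Require Import all_boot.
From mathcomp Require Import zify.
From Stdlib Require Import ClassicalEpsilon FunctionalExtensionality ProofIrrelevance.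

Lemma cell1 m x : 1 <= x <= m -> is_cell m 1 x.
Proof. move=> H; rewrite /is_cell; apply/and4P; split; lia. Qed.

Definition arr (m k : nat) : array :=
  fun i j => if is_cell m i j then (i + j - 1) + (i - 1) + (i + j - 1 == k) else 0.

Lemma arr_qa m k : is_quasi_array m (arr m k).
Proof.
rewrite /is_quasi_array /arr; split; [|split; [|split]].
- move=> i j Hc; rewrite Hc; move/and4P: Hc => [H1 H2 H3 H4]; lia.
- move=> j H1 H2.
  rewrite (@cell1 m (j)); last lia.
  rewrite (@cell1 m (j.+1)); last lia.
  case: eqP; case: eqP; lia.
- move=> i j Hc; rewrite Hc; move/and4P: Hc => [H1 H2 H3 H4].
  rewrite (@cell1 m (i + j - 1)); last lia.
  have -> : 1 + (i + j - 1) - 1 = i + j - 1 by lia.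
  lia.
- by move=> i j /negbTE ->.
Qed.

Definition arr0 (m : nat) : array :=
  fun i j => if is_cell m i j then (i + j - 1) + (i - 1) else 0.

Lemma arr0_qa m : is_quasi_array m (arr0 m).
Proof.
rewrite /is_quasi_array /arr0; split; [|split; [|split]].
- move=> i j Hc; rewrite Hc; move/and4P: Hc => [H1 H2 H3 H4]; lia.
- move=> j H1 H2.
  rewrite (@cell1 m (j)); last lia.
  rewrite (@cell1 m (j.+1)); last lia.
  lia.
- move=> i j Hc; rewrite Hc; move/and4P: Hc => [H1 H2 H3 H4].
  rewrite (@cell1 m (i + j - 1)); last lia.
  have -> : 1 + (i + j - 1) - 1 = i + j - 1 by lia.
  lia.
- by move=> i j /negbTE ->.
Qed.

Lemma arr_D m k : arr m k = D m k (arr0 m).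
Proof.
apply: functional_extensionality => i; apply: functional_extensionality => j.
rewrite /arr /D /arr0; case: (is_cell m i j) => /=; last by [].
case: eqP => _; lia.
Qed.

Definition v0 m : quasi_array m := exist _ (arr0 m) (arr0_qa m).
Definition w0 m k : quasi_array m := exist _ (arr m k) (arr_qa m k).

Lemma edge0 m (i : 'I_m) : Delta_edge (v0 m) (w0 m i.+1).
Proof.
exists i.+1; split; last by rewrite /= arr_D.
have Hi := ltn_ord i.
case: (eqVneq i.+1 m) => [->|Hne]; first by left.
right; split; first by [].
split; first lia.
rewrite /= /arr0.
rewrite (@cell1 m (i.+1)); last lia.
rewrite (@cell1 m (i.+2)); last lia.
lia.
Qed.

Lemma w0_inj m (i i' : 'I_m) : w0 m i.+1 = w0 m i'.+1 -> i = i'.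
Proof.
move=> H; have := f_equal (fun q => proj1_sig q 1 i.+1) H.
rewrite /= /arr.
have Hi := ltn_ord i; have Hi' := ltn_ord i'.
rewrite (@cell1 m (i.+1)); last lia.
move=> E; apply/val_inj => /=; move: E; case: eqP; case: eqP; lia.
Qed.

Lemma L m1 m2 (g : quasi_array m2 -> quasi_array m1) :
  0 < m1 -> injective g -> (forall P Q, Delta_edge P Q -> Delta_edge (g P) (g Q)) ->
  m2 <= m1.
Proof.
move=> Hm1 ginj gedge.
have Hex : forall i : 'I_m2, exists k : 'I_m1,
   proj1_sig (g (w0 m2 i.+1)) = D m1 k.+1 (proj1_sig (g (v0 m2))).
  move=> i; have [k [Hk E]] := gedge _ _ (@edge0 m2 i).
  have Hk' : k.-1 < m1 by case: Hk => [->|]; lia.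
  exists (Ordinal Hk') => /=.
  have -> : k.-1.+1 = k by case: Hk => [->|]; lia.
  exact: E.
pose h := fun i => proj1_sig (constructive_indefinite_description _ (Hex i)).
have hP : forall i : 'I_m2, proj1_sig (g (w0 m2 i.+1)) = D m1 (h i).+1 (proj1_sig (g (v0 m2))).
  move=> i; rewrite /h; by case: constructive_indefinite_description.
have hinj : injective h.
  move=> i i' E; apply: (@w0_inj m2); apply: ginj.
  apply: eq_sig_hprop; first by move=> ? ? ?; apply: proof_irrelevance.
  by rewrite !hP E.
by have := leq_card h hinj; rewrite !card_ord.
Qed.

Theorem proposition4p3 (m1 m2 : nat) :
  0 < m1 -> 0 < m2 -> Delta_isomorphic m1 m2 -> m1 = m2.
Proof.
move=> H1 H2 [f [[g fg gf] Hf]].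
apply/eqP; rewrite eqn_leq; apply/andP; split.
- apply: (@L m2 m1 f) => //; first exact: can_inj fg.
  by move=> P Q /Hf.
- apply: (@L m1 m2 g) => //; first exact: can_inj gf.
  by move=> P Q E; apply/Hf; rewrite !gf.
Qed.
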